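(* Let $A_m(x)=R_{2m}(x)$ and $B_m(x)=R_{2m+1}(x)$ for $m\ge0$. Then, as formal power series in $z$, \[ \sum_{m\ge0}A_m(x)z^m=\frac{1-xz^2}{1-(1+x+x^2)z+x^2z^2},\qquad \sum_{m\ge0}B_m(x)z^m=\frac{1+x^3z}{1-(1+x+x^2)z+x^2z^2}+x . \]
   Context: For $n\ge1$ let $\Xi_n$ be the poset on $\{x_1,\dots,x_n\}$ whose cover relations are exactly: $x_2\prec x_1$, $x_3\prec x_2$, and for $3\le i\le n-1$, $x_i\prec x_{i+1}$ if $i$ is odd and $x_{i+1}\prec x_i$ if $i$ is even (so $x_1>x_2>x_3<x_4>x_5<\cdots$). A filter of a poset is an up-closed subset. $\Omega_n$ is the lattice of filters of $\Xi_n$ under reverse inclusion; $\Omega_0$ is the one-element lattice. $R_n(x)=\sum_{F\in\Omega_n}x^{\,n-|F|}$ is the rank generating function of $\Omega_n$, with $R_0(x)=1$. *)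

(* Defs.v *)
From mathcomp Require Import all_boot all_order all_algebra.
Set Implicit Arguments. Unset Strict Implicit. Unset Printing Implicit Defensive.
Import GRing.Theory.
Local Open Scope ring_scope.

(* The poset Xi_n on {x_1,...,x_n}; element x_i is represented by the
   ordinal (i-1 : 'I_n).  xi_cover n a b  <=>  x_a is covered by x_b
   (x_a < x_b is a cover relation), with 1-based indices i = a+1, j = b+1:
     x_2 < x_1, x_3 < x_2,
     for 3 <= i <= n-1: x_i < x_{i+1} if i odd, x_{i+1} < x_i if i even. *)
Definition xi_cover (n : nat) : rel 'I_n := fun a b =>
  let i := (a.+1)%N in let j := (b.+1)%N in
  [|| (i == 2) && (j == 1),
      (i == 3) && (j == 2),
      [&& (3 <= i)%N, odd i & j == i.+1]
    | [&& (3 <= j)%N, ~~ odd j & i == j.+1] ].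

Definition xi_le (n : nat) (a b : 'I_n) : bool := connect (@xi_cover n) a b.

Definition is_filter (n : nat) (F : {set 'I_n}) : bool :=
  [forall a : 'I_n, forall b : 'I_n, (a \in F) && xi_le a b ==> (b \in F)].

Definition R (n : nat) : {poly int} :=
  \sum_(F : {set 'I_n} | is_filter F) 'X^(n - #|F|).

Definition fps := nat -> {poly int}.
Definition fps_mul (f g : fps) : fps :=
  fun k => \sum_(i < k.+1) f i * g (k - i)%N.
Definition fps_sub (f g : fps) : fps := fun k => f k - g k.
Definition fps_const (c : {poly int}) : fps := fun k => if k == 0%N then c else 0.
Definition fps_of_poly (p : {poly {poly int}}) : fps := fun k => p`_k.

Definition xx : {poly int} := 'X.
Definition zz : {poly {poly int}} := 'X.

Definition Den : {poly {poly int}} :=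
  1 - (1 + xx + xx ^+ 2)%:P * zz + (xx ^+ 2)%:P * zz ^+ 2.
Definition NumA : {poly {poly int}} := 1 - xx%:P * zz ^+ 2.
Definition NumB : {poly {poly int}} := 1 + (xx ^+ 3)%:P * zz.

Definition A_ser : fps := fun m => R (2 * m).
Definition B_ser : fps := fun m => R (2 * m).+1.

(* Main.v *)
Require Import Defs.
From mathcomp Require Import all_boot all_order all_algebra.
From mathcomp Require Import zify ring.
From Stdlib Require Import FunctionalExtensionality.
Set Implicit Arguments. Unset Strict Implicit. Unset Printing Implicit Defensive.
Import GRing.Theory.

Definition cov (a b : nat) : bool :=
  let i := a.+1 in let j := b.+1 in
  [|| (i == 2) && (j == 1),
      (i == 3) && (j == 2),
      [&& (3 <= i)%N, odd i & j == i.+1]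
    | [&& (3 <= j)%N, ~~ odd j & i == j.+1] ].

Definition up (k : nat) : bool := (2 <= k) && ~~ odd k.

Lemma covxx a : cov a a = false.
Proof. rewrite /cov; case: (odd _); lia. Qed.

Lemma cov_up m : cov m m.+1 = up m.
Proof. rewrite /cov /up /=; case: (odd m) => /=; lia. Qed.

Lemma cov_dn m : cov m.+1 m = ~~ up m.
Proof. rewrite /cov /up /=; case: (odd m) => /=; lia. Qed.

Lemma cov_far a m : a < m -> cov a m.+1 = false /\ cov m.+1 a = false.
Proof. rewrite /cov => h; split; case: (odd _); case: (odd _); lia. Qed.

Lemma xi_coverE n (a b : 'I_n) : xi_cover a b = cov a b.
Proof. by []. Qed.

Lemma filterP n (F : {set 'I_n}) :
  reflect (forall a b : 'I_n, cov a b -> a \in F -> b \in F) (is_filter F).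
Proof.
apply: (iffP forallP) => [H a b cab aF | H a].
- have := forallP (H a) b; rewrite aF /xi_le connect1 //.
- apply/forallP => b; apply/implyP => /andP [aF /connectP [p pth ->]].
  elim: p a aF pth => [|c p IH] a aF //= /andP [ac pth].
  by apply: IH pth; apply: H ac aF.
Qed.

Definition hset n (F : {set 'I_n}) (bb : bool) : {set 'I_n.+1} :=
  if bb then ord_max |: (lift ord_max @: F) else lift ord_max @: F.

Lemma mem_hset n (F : {set 'I_n}) bb (i : 'I_n.+1) :
  (i \in hset F bb) = if unlift ord_max i is Some j then j \in F else bb.
Proof.
case: unliftP => [j ->|->]; rewrite /hset.
- have li := @lift_inj n.+1 ord_max.
  have := neq_lift ord_max j; rewrite eq_sym => /negbTE nl.
  by case: bb; rewrite ?in_setU1 (mem_imset _ _ li) // nl.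
- case: bb; rewrite ?in_setU1 ?eqxx //; apply/imsetP => -[j _ e].
  by move: (neq_lift ord_max j); rewrite -e eqxx.
Qed.

Lemma card_hset n (F : {set 'I_n}) bb : #|hset F bb| = (#|F| + bb)%N.
Proof.
have ci : #|lift ord_max @: F| = #|F| by apply: card_imset; exact: lift_inj.
rewrite /hset; case: bb; last by rewrite ci addn0.
rewrite cardsU1 ci.
suff -> : ord_max \notin lift ord_max @: F by rewrite addnC.
apply/imsetP => -[j _ e].
by move: (neq_lift ord_max j); rewrite -e eqxx.
Qed.

Definition hinv1 n (G : {set 'I_n.+1}) : {set 'I_n} := [set j | lift ord_max j \in G].

Lemma hsetK n (F : {set 'I_n}) bb : hinv1 (hset F bb) = F.
Proof. by apply/setP => j; rewrite inE mem_hset liftK. Qed.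

Lemma hinvK n (G : {set 'I_n.+1}) : hset (hinv1 G) (ord_max \in G) = G.
Proof. by apply/setP => i; rewrite mem_hset; case: unliftP => [j ->|->]; rewrite ?inE. Qed.

Lemma liftmaxE n (a : 'I_n) : (lift ord_max a : nat) = a.
Proof. by rewrite /= /bump leqNgt ltn_ord. Qed.

Definition link n (F : {set 'I_n}) (bb : bool) : bool :=
  [forall a : 'I_n, (cov a n ==> ((a \in F) ==> bb)) && (cov n a ==> (bb ==> (a \in F)))].

Lemma filter_hset n (F : {set 'I_n}) bb :
  is_filter (hset F bb) = is_filter F && link F bb.
Proof.
apply/filterP/andP => [H | [/filterP HF /forallP Hl] a b].
- split.
  + apply/filterP => a b cab aF.
    have := H (lift ord_max a) (lift ord_max b); rewrite !mem_hset !liftK !liftmaxE.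
    by apply.
  + apply/forallP => a; apply/andP; split; apply/implyP => c; apply/implyP => h.
    * have := H (lift ord_max a) ord_max; rewrite !mem_hset liftK unlift_none liftmaxE.
      by apply.
    * have := H ord_max (lift ord_max a); rewrite !mem_hset liftK unlift_none liftmaxE.
      by apply.
- case: (unliftP ord_max a) => [a'|] ->; case: (unliftP ord_max b) => [b'|] ->;
    rewrite !mem_hset ?liftK ?unlift_none ?liftmaxE.
  + exact: HF.
  + by move=> c; have /andP [/implyP h _] := Hl a'; apply/implyP; apply: h.
  + by move=> c; have /andP [_ /implyP h] := Hl b'; apply/implyP; apply: h.
  + by rewrite /= covxx.
Qed.

Lemma link_eval m (F : {set 'I_m.+1}) bb :
  link F bb = if up m then (ord_max \in F) ==> bb else bb ==> (ord_max \in F).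
Proof.
apply/forallP/idP => [H | H a].
- have /andP [h1 h2] := H ord_max; move: h1 h2.
  by rewrite /= cov_up cov_dn; case: (up m).
- case: (unliftP ord_max a) => [a'|] ->.
  + have lt : (lift ord_max a' < m)%N by rewrite liftmaxE; exact: ltn_ord.
    by have [-> ->] := cov_far lt.
  + move: H; rewrite /= cov_up cov_dn; case: (up m) => ->; by rewrite ?implybT.
Qed.

Definition hasl n (F : {set 'I_n}) : bool := [exists i in F, (val i == n.-1)%N].

Lemma haslS m (G : {set 'I_m.+1}) : hasl G = (ord_max \in G).
Proof.
apply/existsP/idP => [[i /andP [iG /eqP ei]] | mG]; last by exists ord_max; rewrite mG eqxx.
have e : i = ord_max by apply: val_inj.
by rewrite -e.
Qed.

Local Open Scope ring_scope.

Definition PP n : {poly int} := \sum_(F : {set 'I_n} | is_filter F && hasl F) 'X^(n - #|F|).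
Definition QQ n : {poly int} := \sum_(F : {set 'I_n} | is_filter F && ~~ hasl F) 'X^(n - #|F|).

Lemma R_PQ n : R n = PP n + QQ n.
Proof. by rewrite /R (bigID (@hasl n)). Qed.

Lemma sum_split n (bb : bool) :
  \sum_(G : {set 'I_n.+1} | is_filter G && ((ord_max \in G) == bb)) ('X^(n.+1 - #|G|) : {poly int})
  = \sum_(F : {set 'I_n} | is_filter F && link F bb) ('X^(n.+1 - (#|F| + bb)) : {poly int}).
Proof.
rewrite (reindex_onto (fun F : {set 'I_n} => hset F bb) (@hinv1 n)); last first.
  by move=> G /andP [_ /eqP <-]; apply: hinvK.
apply: eq_big => F; last by rewrite card_hset.
by rewrite filter_hset hsetK eqxx mem_hset unlift_none eqxx !andbT.
Qed.

Lemma cardle n (F : {set 'I_n}) : (#|F| <= n)%N.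
Proof. by have := max_card F; rewrite card_ord. Qed.

Lemma PP_S n : PP n.+1 = \sum_(F : {set 'I_n} | is_filter F && link F true) ('X^(n - #|F|) : {poly int}).
Proof.
rewrite /PP (eq_bigl (fun G : {set 'I_n.+1} => is_filter G && ((ord_max \in G) == true))); last first.
  by move=> G; rewrite haslS eqb_id.
by rewrite sum_split; apply: eq_bigr => F _; rewrite addn1 subSS.
Qed.

Lemma QQ_S n : QQ n.+1 = \sum_(F : {set 'I_n} | is_filter F && link F false) ('X^(n - #|F|) * 'X : {poly int}).
Proof.
rewrite /QQ (eq_bigl (fun G : {set 'I_n.+1} => is_filter G && ((ord_max \in G) == false))); last first.
  by move=> G; rewrite haslS eqbF_neg.
by rewrite sum_split; apply: eq_bigr => F _; rewrite addn0 subSn ?cardle // exprSr.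
Qed.

Definition step (n : nat) (v : {poly int} * {poly int}) : {poly int} * {poly int} :=
  let: (p, q) := v in
  if n is m.+1 then (if up m then (p + q, q * 'X) else (p, (p + q) * 'X))
  else (p + q, (p + q) * 'X).

Fixpoint pq n := if n is m.+1 then step m (pq m) else (0, 1).

Lemma hasl0 (F : {set 'I_0}) : hasl F = false.
Proof. by apply/existsP => -[[]]. Qed.

Lemma PQ0 : (PP 0, QQ 0) = (0, 1).
Proof.
congr pair.
  by rewrite /PP big_pred0 // => F; rewrite hasl0 andbF.
rewrite /QQ (big_pred1 set0) ?cards0 ?expr0 // => F /=.
have -> : F = set0 by apply/setP => -[].
rewrite hasl0 eqxx andbT; by apply/filterP => -[].
Qed.

Lemma sumR n : \sum_(F : {set 'I_n} | is_filter F) ('X^(n - #|F|) : {poly int}) = PP n + QQ n.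
Proof. by rewrite -R_PQ. Qed.

Lemma sum_l0 bb : \sum_(F : {set 'I_0} | is_filter F && link F bb) ('X^(0 - #|F|) : {poly int}) = PP 0 + QQ 0.
Proof.
have l0 (F : {set 'I_0}) : link F bb = true by apply/forallP => -[] //.
under eq_bigl => F do rewrite l0 andbT.
by rewrite sumR.
Qed.

Lemma sum_lt m : \sum_(F : {set 'I_m.+1} | is_filter F && link F true) ('X^(m.+1 - #|F|) : {poly int})
  = if up m then PP m.+1 + QQ m.+1 else PP m.+1.
Proof.
under eq_bigl => F do rewrite link_eval -haslS.
case: (up m) => /=; last by [].
under eq_bigl => F do rewrite implybT andbT.
by rewrite sumR.
Qed.

Lemma sum_lf m : \sum_(F : {set 'I_m.+1} | is_filter F && link F false) ('X^(m.+1 - #|F|) : {poly int})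
  = if up m then QQ m.+1 else PP m.+1 + QQ m.+1.
Proof.
under eq_bigl => F do rewrite link_eval -haslS.
case: (up m) => /=.
  by under eq_bigl => F do rewrite implybF.
under eq_bigl => F do rewrite andbT.
by rewrite sumR.
Qed.

Lemma PQ_S n : (PP n.+1, QQ n.+1) = step n (PP n, QQ n).
Proof.
rewrite PP_S QQ_S -big_distrl /=; case: n => [|m].
  by rewrite !sum_l0.
by rewrite sum_lt sum_lf; case: (up m).
Qed.

Lemma PQ_pq n : (PP n, QQ n) = pq n.
Proof. by elim: n => [|n IH]; rewrite ?PQ0 // PQ_S IH. Qed.

Lemma R_pq n : R n = (pq n).1 + (pq n).2.
Proof. by rewrite R_PQ -PQ_pq. Qed.

Definition rec (v : {poly int} * {poly int}) : {poly int} * {poly int} :=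
  (v.1 + v.2, (v.1 + v.2 + v.2 * 'X) * 'X).
Fixpoint vv j := if j is i.+1 then rec (vv i) else (- 'X, 1 + 'X).

Lemma up_even j : up (j.*2.+2) = true.
Proof. by rewrite /up /= odd_double. Qed.
Lemma up_odd j : up (j.*2.+3) = false.
Proof. by rewrite /up /= odd_double. Qed.

Lemma pq3 : pq 3 = (1, (1 + (1 + 'X) * 'X) * 'X).
Proof.
have u0 : up 0 = false by [].
have u1 : up 1 = false by [].
by rewrite /=; congr pair; ring.
Qed.

Lemma vv_pq j : vv j.+1 = pq (j.*2.+3).
Proof.
elim: j => [|j IH]; first by rewrite pq3 /= /rec /=; congr pair; ring.
change (vv j.+2) with (rec (vv j.+1)); rewrite IH.
change (pq (j.+1).*2.+3) with (step (j.*2.+4) (step (j.*2.+3) (pq j.*2.+3))).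
case: (pq j.*2.+3) => p q.
by rewrite /= up_even /step up_odd /rec.
Qed.

Definition fA (v : {poly int} * {poly int}) := v.1 + v.2 + v.2 * 'X.
Definition fB (v : {poly int} * {poly int}) := v.1 + v.2.

Lemma A_v j : A_ser j.+1 = fA (vv j).
Proof.
rewrite /A_ser mul2n R_pq.
case: j => [|i].
  have u0 : up 0 = false by [].
  by rewrite /= /fA /=; ring.
rewrite vv_pq.
change (pq (i.+2).*2) with (step (i.*2.+3) (pq i.*2.+3)).
by case: (pq i.*2.+3) => p q; rewrite /= up_even /fA /=; ring.
Qed.

Lemma A0 : A_ser 0%N = 1.
Proof. by rewrite /A_ser R_pq /= add0r. Qed.

Lemma B_v j : fps_sub B_ser (fps_const xx) j = fB (vv j).
Proof.
rewrite /fps_sub /B_ser /fps_const mul2n R_pq.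
case: j => [|i].
  by rewrite /= /fB /xx /=; ring.
by rewrite vv_pq /= subr0.
Qed.

Definition cc : {poly int} := 1 + xx + xx ^+ 2.

Lemma DenE i : (Den`_i : {poly int}) = (i == 0)%:R - cc * (i == 1)%:R + xx ^+ 2 * (i == 2)%:R.
Proof. by rewrite /Den /zz coefD coefB coef1 !coefCM coefX coefXn. Qed.

Lemma conv0 f : fps_mul (fps_of_poly Den) f 0%N = f 0%N.
Proof. rewrite /fps_mul big_ord1 /fps_of_poly DenE /= subn0; ring. Qed.

Lemma conv1 f : fps_mul (fps_of_poly Den) f 1%N = f 1%N - cc * f 0%N.
Proof.
rewrite /fps_mul !big_ord_recl big_ord0 /fps_of_poly !DenE /= ?subn0 ?subnn.
ring.
Qed.

Lemma convSS f k : fps_mul (fps_of_poly Den) f k.+2 = f k.+2 - cc * f k.+1 + xx ^+ 2 * f k.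
Proof.
rewrite /fps_mul !big_ord_recl big1 => [|i _]; last first.
  rewrite /fps_of_poly DenE /=; ring.
rewrite /fps_of_poly !DenE /= ?subn0 ?subSS ?subn0.
ring.
Qed.

Lemma rec_gen (a b : {poly int}) v :
  let L w := a * w.1 + b * w.2 in
  L (rec (rec v)) - cc * L (rec v) + xx ^+ 2 * L v = 0.
Proof. by case: v => p q; rewrite /= /cc /xx; ring. Qed.

Theorem mainTheorem4 :
  fps_mul (fps_of_poly Den) A_ser = fps_of_poly NumA /\
  fps_mul (fps_of_poly Den) (fps_sub B_ser (fps_const xx)) = fps_of_poly NumB.
Proof.
split; apply: functional_extensionality => k.
- have NA i : (NumA`_i : {poly int}) = (i == 0%N)%:R - xx * (i == 2%N)%:R.
    by rewrite /NumA /zz coefB coef1 coefCM coefXn.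
  rewrite /fps_of_poly NA.
  case: k => [|[|k]]; first by rewrite conv0 A0 /=; ring.
    by rewrite conv1 A0 A_v /= /fA /cc /xx /=; ring.
  rewrite convSS; case: k => [|j].
    by rewrite A0 !A_v /= /fA /cc /xx /=; ring.
  rewrite !A_v /=; case: (vv j) => p q; rewrite /fA /rec /cc /xx /=; ring.
- have NB i : (NumB`_i : {poly int}) = (i == 0%N)%:R + xx ^+ 3 * (i == 1%N)%:R.
    by rewrite /NumB /zz coefD coef1 coefCM coefX.
  rewrite /fps_of_poly NB.
  case: k => [|[|k]]; first by rewrite conv0 B_v /= /fB /=; ring.
    by rewrite conv1 !B_v /= /fB /cc /xx /=; ring.
  rewrite convSS !B_v /=; case: (vv k) => p q; rewrite /fB /rec /cc /xx /=; ring.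
Qed.
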